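(* For $\theta\in \mathrm{SL}_2(\mathbb Z)$ let $\widehat\theta\in\mathrm{Aut}_{\mathbb F}(\mathfrak{sl}_2)$ be $\widehat\theta(u)=\theta u\theta^{-1}$. The homomorphism $\theta\mapsto\widehat\theta$ from $\mathrm{SL}_2(\mathbb Z)$ to $\mathrm{Aut}_{\mathbb F}(\mathfrak{sl}_2)$ has kernel $\{\pm I\}$ and so induces an injective homomorphism $\imath:\mathrm{PSL}_2(\mathbb Z)\to \mathrm{Aut}_{\mathbb F}(\mathfrak{sl}_2)$. The image of $\imath$ is exactly the group $G$. In particular $G\cong \mathrm{PSL}_2(\mathbb Z)$.
   Context: $\mathbb F$ is a field of characteristic zero and $\mathfrak{sl}_2$ is the Lie algebra of $2\times 2$ trace-zero matrices over $\mathbb F$, with $\mathrm{ad}\,u(v)=[u,v]$. Let $x^*=\begin{pmatrix}1&-1\\1&-1\end{pmatrix}$, $y^*=\begin{pmatrix}0&0\\1&0\end{pmatrix}$, $z^*=\begin{pmatrix}0&-1\\0&0\end{pmatrix}$. These are nilpotent, so $\exp(\mathrm{ad}\,u)=\sum_{n\ge0}(\mathrm{ad}\,u)^n/n!$ is a well-defined automorphism of $\mathfrak{sl}_2$ for $u\in\{x^*,y^*,z^*\}$. $G$ is the subgroup of $\mathrm{Aut}_{\mathbb F}(\mathfrak{sl}_2)$ generated by $\exp(\mathrm{ad}\,x^* )$, $\exp(\mathrm{ad}\,y^* )$ and $\exp(\mathrm{ad}\,z^* )$. *)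

(* Defs.v *)
From HB Require Import structures.
From mathcomp Require Import all_boot all_order all_algebra.
Set Implicit Arguments. Unset Strict Implicit. Unset Printing Implicit Defensive.
Import Order.TTheory GRing.Theory Num.Theory.
Local Open Scope ring_scope.

Section Defs.
Variable F : fieldType.

Definition sl2 : pred 'M[F]_2 := [pred A | \tr A == 0].

Definition ad (u : 'M[F]_2) (v : 'M[F]_2) : 'M[F]_2 := u *m v - v *m u.

(* exp(ad u) = sum_n (ad u)^n / n!.  For nilpotent u, ad u is a nilpotent
   operator on the 4-dimensional space 'M_2, so (ad u)^n = 0 for n >= 4 and
   the series is exactly this finite sum. *)
Definition expad (u : 'M[F]_2) (v : 'M[F]_2) : 'M[F]_2 :=
  \sum_(n < 4) (n`!%:R)^-1 *: iter n (ad u) v.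

Definition xstar : 'M[F]_2 := \matrix_(i < 2, j < 2) (if j == 0 :> nat then 1 else -1).
Definition ystar : 'M[F]_2 := \matrix_(i < 2, j < 2)
  (if (i == 1 :> nat) && (j == 0 :> nat) then 1 else 0).
Definition zstar : 'M[F]_2 := \matrix_(i < 2, j < 2)
  (if (i == 0 :> nat) && (j == 1 :> nat) then -1 else 0).

(* Maps are modelled as functions 'M_2 -> 'M_2, considered only on sl2. *)
Definition agree_sl2 (f g : 'M[F]_2 -> 'M[F]_2) := {in sl2, f =1 g}.

Definition isLieAut (f : 'M[F]_2 -> 'M[F]_2) : Prop :=
  [/\ {in sl2, forall u, f u \in sl2},
      {in sl2 &, forall u v, forall a : F, f (a *: u + v) = a *: f u + f v},
      {in sl2 &, forall u v, f (ad u v) = ad (f u) (f v)} &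
      exists g : 'M[F]_2 -> 'M[F]_2,
        [/\ {in sl2, forall u, g u \in sl2}, {in sl2, cancel f g} &
            {in sl2, cancel g f}]].

Definition subgroup_closed (H : ('M[F]_2 -> 'M[F]_2) -> Prop) : Prop :=
  [/\ H id,
      (forall f g, H f -> H g -> H (f \o g)),
      (forall f g, H f -> {in sl2, cancel f g} -> {in sl2, cancel g f} -> H g) &
      (forall f g, H f -> agree_sl2 f g -> H g)].

Definition Ggen (f : 'M[F]_2 -> 'M[F]_2) : Prop :=
  forall H, subgroup_closed H ->
    H (expad xstar) -> H (expad ystar) -> H (expad zstar) -> H f.

Definition SL2Z (t : 'M[int]_2) : Prop := \det t = 1.

Definition hat (t : 'M[int]_2) (u : 'M[F]_2) : 'M[F]_2 :=
  let tF := map_mx (fun z : int => z%:~R) t in tF *m u *m invmx tF.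

End Defs.

(* Main.v *)
Require Import Defs.
From HB Require Import structures.
From mathcomp Require Import all_boot all_order all_algebra.
Import Order.TTheory GRing.Theory Num.Theory.
Local Open Scope ring_scope.

Definition mk2 {R : Type} (a b c d : R) : 'M[R]_2 :=
  \matrix_(i < 2, j < 2) if i == 0 :> nat then (if j == 0 :> nat then a else b)
                         else (if j == 0 :> nat then c else d).

Lemma mk2_eta {R : Type} (A : 'M[R]_2) : A = mk2 (A 0 0) (A 0 1) (A 1 0) (A 1 1).
Proof.
apply/matrixP => i j; rewrite !mxE.
by case: i => [[|[|//]]] Hi; case: j => [[|[|//]]] Hj /=;
  congr (A _ _); apply/val_inj.
Qed.

Lemma mk2E {R : Type} (a b c d : R) :
  [/\ mk2 a b c d 0 0 = a, mk2 a b c d 0 1 = b, mk2 a b c d 1 0 = c & mk2 a b c d 1 1 = d].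
Proof. by rewrite !mxE. Qed.

Lemma mk2_inj {R : Type} (a b c d a' b' c' d' : R) :
  mk2 a b c d = mk2 a' b' c' d' -> [/\ a = a', b = b', c = c' & d = d'].
Proof.
move=> H; have := mk2E a b c d; have := mk2E a' b' c' d'; rewrite H.
by case=> -> -> -> -> [].
Qed.

Lemma mk2_mul {R : pzSemiRingType} (a b c d a' b' c' d' : R) :
  mk2 a b c d *m mk2 a' b' c' d' =
  mk2 (a * a' + b * c') (a * b' + b * d') (c * a' + d * c') (c * b' + d * d').
Proof.
apply/matrixP => i j; rewrite !mxE !big_ord_recl big_ord0 !mxE /= addr0.
by case: i => [[|[|//]]] Hi; case: j => [[|[|//]]] Hj.
Qed.

Lemma mk2_add {R : nmodType} (a b c d a' b' c' d' : R) :
  mk2 a b c d + mk2 a' b' c' d' = mk2 (a + a') (b + b') (c + c') (d + d').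
Proof.
apply/matrixP => i j; rewrite !mxE.
by case: i => [[|[|//]]] Hi; case: j => [[|[|//]]] Hj.
Qed.

Lemma mk2_opp {R : zmodType} (a b c d : R) :
  - mk2 a b c d = mk2 (- a) (- b) (- c) (- d).
Proof.
apply/matrixP => i j; rewrite !mxE.
by case: i => [[|[|//]]] Hi; case: j => [[|[|//]]] Hj.
Qed.

Lemma mk2_scale {R : pzRingType} (k a b c d : R) :
  k *: mk2 a b c d = mk2 (k * a) (k * b) (k * c) (k * d).
Proof.
apply/matrixP => i j; rewrite !mxE.
by case: i => [[|[|//]]] Hi; case: j => [[|[|//]]] Hj.
Qed.

Lemma mk2_1 {R : pzSemiRingType} : (1%:M : 'M[R]_2) = mk2 1 0 0 1.
Proof.
apply/matrixP => i j; rewrite !mxE.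
by case: i => [[|[|//]]] Hi; case: j => [[|[|//]]] Hj.
Qed.

Lemma mk2_map {R S : Type} (f : R -> S) (a b c d : R) :
  map_mx f (mk2 a b c d) = mk2 (f a) (f b) (f c) (f d).
Proof.
apply/matrixP => i j; rewrite !mxE.
by case: i => [[|[|//]]] Hi; case: j => [[|[|//]]] Hj.
Qed.

Lemma mk2_tr {R : pzSemiRingType} (a b c d : R) : \tr (mk2 a b c d) = a + d.
Proof. by rewrite /mxtrace !big_ord_recl big_ord0 !mxE /= addr0. Qed.

Lemma mk2_det {R : comPzRingType} (a b c d : R) : \det (mk2 a b c d) = a * d - b * c.
Proof.
rewrite (expand_det_row _ 0) !big_ord_recl big_ord0 addr0 /cofactor !det_mx11 !mxE /=.
rewrite !expr0 expr1 !mul1r mulN1r mulrN.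
done.
Qed.

Lemma mk2_0 {R : nmodType} : (0 : 'M[R]_2) = mk2 0 0 0 0.
Proof.
apply/matrixP => i j; rewrite !mxE.
by case: i => [[|[|//]]] Hi; case: j => [[|[|//]]] Hj.
Qed.

Lemma inv_uniq (R : comUnitRingType) n (A B : 'M[R]_n) : A *m B = 1%:M -> invmx A = B.
Proof.
move=> AB; have [uA _] := mulmx1_unit AB.
by rewrite -[invmx A]mulmx1 -AB mulmxA mulVmx // mul1mx.
Qed.

Definition cj {F : fieldType} (M u : 'M[F]_2) := M *m u *m invmx M.

Lemma cjM (F : fieldType) (M N u : 'M[F]_2) : M \in unitmx -> N \in unitmx ->
  cj (M *m N) u = cj M (cj N u).
Proof.
move=> uM uN; rewrite /cj.
have -> : invmx (M *m N) = invmx N *m invmx M.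
  by apply: inv_uniq; rewrite -mulmxA (mulmxA N) mulmxV // mul1mx mulmxV.
by rewrite !mulmxA.
Qed.

Lemma cj1 (F : fieldType) (u : 'M[F]_2) : cj 1%:M u = u.
Proof. by rewrite /cj invmx_scalar invr1 mul1mx mulmx1. Qed.

Lemma cjN (F : fieldType) (M u : 'M[F]_2) : M \in unitmx -> cj (- M) u = cj M u.
Proof.
move=> uM; rewrite /cj.
have -> : invmx (- M) = - invmx M by apply: inv_uniq; rewrite mulNmx mulmxN opprK mulmxV.
by rewrite mulNmx mulmxN mulNmx opprK.
Qed.

Definition TF (F : fieldType) (t : 'M[int]_2) : 'M[F]_2 := map_mx (fun z : int => z%:~R) t.

Lemma hatE (F : fieldType) t u : @hat F t u = cj (TF F t) u.
Proof. by []. Qed.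

Lemma TF_unit (F : fieldType) t : SL2Z t -> TF F t \in unitmx.
Proof.
move=> H; rewrite unitmxE /TF (det_map_mx (intr : {rmorphism int -> F})) H.
by rewrite rmorph1 unitr1.
Qed.

Lemma TFM (F : fieldType) t s : TF F (t *m s) = TF F t *m TF F s.
Proof. exact: (map_mxM (intr : {rmorphism int -> F})). Qed.

Lemma TF1 (F : fieldType) : TF F 1%:M = 1%:M.
Proof. exact: (map_mx1 (intr : {rmorphism int -> F})). Qed.

Lemma TFN (F : fieldType) t : TF F (- t) = - TF F t.
Proof. exact: (map_mxN (intr : {rmorphism int -> F})). Qed.

Lemma hat_mul (F : fieldType) t s u : SL2Z t -> SL2Z s ->
  @hat F (t *m s) u = hat t (hat s u).
Proof. by move=> Ht Hs; rewrite !hatE TFM cjM ?TF_unit. Qed.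

Lemma hat1 (F : fieldType) u : @hat F 1%:M u = u.
Proof. by rewrite hatE TF1 cj1. Qed.

Lemma hatN (F : fieldType) t u : SL2Z t -> @hat F (- t) u = hat t u.
Proof. by move=> Ht; rewrite !hatE TFN cjN ?TF_unit. Qed.

Lemma SL2Z_mul t s : SL2Z t -> SL2Z s -> SL2Z (t *m s).
Proof. by rewrite /SL2Z det_mulmx => -> ->; rewrite mulr1. Qed.

Lemma SL2Z_inv t : SL2Z t -> [/\ SL2Z (invmx t), invmx t *m t = 1%:M & t *m invmx t = 1%:M].
Proof.
move=> H; have ut : t \in unitmx by rewrite unitmxE H unitr1.
split; [|exact: mulVmx|exact: mulmxV].
by rewrite /SL2Z det_inv H invr1.
Qed.

Lemma sl2_hat (F : fieldType) t u : SL2Z t -> u \in sl2 (F:=F) -> hat t u \in sl2 (F:=F).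
Proof.
move=> H; rewrite !inE hatE /cj mxtrace_mulC mulmxA mulVmx ?TF_unit // mul1mx.
done.
Qed.

Lemma part1 (F : fieldType) t : SL2Z t -> isLieAut (@hat F t).
Proof.
move=> H; have uT := TF_unit F t H.
split.
- by move=> u; apply: sl2_hat.
- by move=> u v _ _ a; rewrite !hatE /cj mulmxDr mulmxDl -scalemxAr -scalemxAl.
- move=> u v _ _; rewrite /ad !hatE /cj mulmxBr mulmxBl !mulmxA !mulmxKV //.
have [Hi Hit Hti] := SL2Z_inv t H.
exists (hat (invmx t)); split.
- by move=> u; apply: sl2_hat.
- by move=> u _; rewrite -hat_mul // Hit hat1.
- by move=> u _; rewrite -hat_mul // Hti hat1.
Qed.

Lemma part2 (F : fieldType) t1 t2 : SL2Z t1 -> SL2Z t2 ->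
  agree_sl2 (@hat F (t1 *m t2)) (@hat F t1 \o @hat F t2).
Proof. by move=> H1 H2 u _; rewrite hat_mul. Qed.

Lemma intr_eq0 (F : fieldType) (charF0 : [pchar F] =i pred0) (z : int) :
  (z%:~R : F) = 0 -> z = 0.
Proof.
have H := (pcharf0P F).1 charF0.
case: z => n /=; first by move/eqP; rewrite H => /eqP ->.
by rewrite NegzE mulrNz => /eqP; rewrite oppr_eq0 H.
Qed.

Lemma intr_inj (F : fieldType) (charF0 : [pchar F] =i pred0) (y z : int) :
  (y%:~R : F) = z%:~R -> y = z.
Proof.
move=> H; apply/eqP; rewrite -subr_eq0; apply/eqP; apply: (@intr_eq0 F charF0).
by rewrite rmorphB /= H subrr.
Qed.

Lemma absz1P (a : int) : absz a = 1%N -> a = 1 \/ a = -1.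
Proof. by case: a => n /= H; [left; rewrite H | right; case: n H => [|n] // [->]]. Qed.

Lemma int_unit (a d : int) : a * d = 1 -> (a = 1 /\ d = 1) \/ (a = -1 /\ d = -1).
Proof.
move=> H; have := congr1 absz H; rewrite abszM => /eqP; rewrite muln_eq1.
case/andP => /eqP/absz1P Ha /eqP/absz1P Hd.
case: Ha Hd H => -> [] ->; auto; by move/eqP.
Qed.

Lemma part3 (F : fieldType) (charF0 : [pchar F] =i pred0) t : SL2Z t ->
  (agree_sl2 (@hat F t) id <-> (t = 1 \/ t = -1)).
Proof.
move=> H; split; last first.
  have H1 : SL2Z 1%:M by rewrite /SL2Z det1.
  by case=> -> u _ /=; rewrite ?hatN ?hat1.
move=> Ha.
have comm u : u \in sl2 (F:=F) -> TF F t *m u = u *m TF F t.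
  move=> Hu; have := Ha u Hu; rewrite hatE /cj /= => E.
  by rewrite -{2}E mulmxKV // TF_unit.
move: H comm; rewrite /SL2Z [t](@mk2_eta int) /TF mk2_map mk2_det.
set a := t 0 0; set b := t 0 1; set c := t 1 0; set d := t 1 1 => Hdet comm.
have sl1 : mk2 0 1 0 0 \in sl2 (F:=F) by rewrite inE /= mk2_tr addr0.
have sl2' : mk2 0 0 1 0 \in sl2 (F:=F) by rewrite inE /= mk2_tr addr0.
have := comm _ sl1; rewrite !mk2_mul => /(@mk2_inj F) [E1 E2 E3 E4].
have := comm _ sl2'; rewrite !mk2_mul => /(@mk2_inj F) [E5 E6 E7 E8].
move: E1 E2 E3 E4 E5 E6 E7 E8; rewrite !(mul0r, mulr0, mul1r, mulr1, add0r, addr0).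
move=> _ /(@intr_inj F charF0) Had _ /(@intr_eq0 F charF0) Hc /(@intr_eq0 F charF0) Hb _ _ _.
rewrite Hc Hb Had mulr0 subr0 in Hdet *.
case: (int_unit _ _ Hdet) => [[-> _]|[-> _]].
  by left; exact: (esym (@mk2_1 int)).
right; have -> : (-1 : 'M[int]_2) = - mk2 1 0 0 1.
  by congr (- _); exact: (@mk2_1 int).
by rewrite mk2_opp oppr0.
Qed.

Lemma expad_sq (F : fieldType) (charF0 : [pchar F] =i pred0) (u v : 'M[F]_2) :
  u *m u = 0 -> expad u v = (1%:M + u) *m v *m (1%:M - u).
Proof.
move=> uu.
have h2 : ad u (ad u v) = - (u *m v *m u + u *m v *m u).
  rewrite /ad mulmxBr mulmxBl !mulmxA uu mul0mx -(mulmxA v) uu mulmx0.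
  by rewrite sub0r subr0 opprD.
have h3 : ad u (ad u (ad u v)) = 0.
  rewrite h2 /ad mulmxN mulNmx mulmxDr mulmxDl !mulmxA uu !mul0mx.
  by rewrite -!(mulmxA _ u u) uu !mulmx0 !addr0 oppr0 subr0.
have two : (2%:R : F) != 0 by rewrite ((pcharf0P F).1 charF0).
rewrite /expad !big_ord_recl big_ord0 /=.
rewrite h3 h2 scaler0 addr0 /bump /= !factS fact0 /= invr1 !scale1r.
rewrite -mulr2n -scaler_nat scalerN scalerA mulVf // scale1r.
rewrite addr0 /ad mulmxDl mul1mx mulmxDr mulmxN !mulmx1 mulmxDl ?mulmxA.
by rewrite opprD !addrA.
Qed.

Lemma gen_eq (F : fieldType) (charF0 : [pchar F] =i pred0) (u : 'M[F]_2) t :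
  u *m u = 0 -> TF F t = 1%:M + u -> forall v, expad u v = hat t v.
Proof.
move=> uu Ht v; rewrite expad_sq // hatE /cj Ht; congr (_ *m _).
apply/esym/inv_uniq.
by rewrite mulmxDl mul1mx mulmxBr mulmx1 uu subr0 subrK.
Qed.

Definition Xi : 'M[int]_2 := mk2 2 (-1) 1 0.
Definition Yi : 'M[int]_2 := mk2 1 0 1 1.
Definition Zi : 'M[int]_2 := mk2 1 (-1) 0 1.

Lemma SL_Xi : SL2Z Xi. Proof. by rewrite /SL2Z mk2_det. Qed.
Lemma SL_Yi : SL2Z Yi. Proof. by rewrite /SL2Z mk2_det. Qed.
Lemma SL_Zi : SL2Z Zi. Proof. by rewrite /SL2Z mk2_det. Qed.

Lemma xstarE (F : fieldType) : xstar F = mk2 1 (-1) 1 (-1).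
Proof.
apply/matrixP => i j; rewrite !mxE.
by case: i => [[|[|//]]] Hi; case: j => [[|[|//]]] Hj.
Qed.
Lemma ystarE (F : fieldType) : ystar F = mk2 0 0 1 0.
Proof.
apply/matrixP => i j; rewrite !mxE.
by case: i => [[|[|//]]] Hi; case: j => [[|[|//]]] Hj.
Qed.
Lemma zstarE (F : fieldType) : zstar F = mk2 0 (-1) 0 0.
Proof.
apply/matrixP => i j; rewrite !mxE.
by case: i => [[|[|//]]] Hi; case: j => [[|[|//]]] Hj.
Qed.

Ltac simp := rewrite ?(mul1r, mulr1, mulN1r, mulrN1, opprK, subrr, addrN, mul0r, mulr0, addr0, add0r, oppr0).

Lemma xx (F : fieldType) : xstar F *m xstar F = 0.
Proof. rewrite xstarE mk2_mul mk2_0; simp; done. Qed.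
Lemma yy (F : fieldType) : ystar F *m ystar F = 0.
Proof. rewrite ystarE mk2_mul mk2_0; simp; done. Qed.
Lemma zz (F : fieldType) : zstar F *m zstar F = 0.
Proof. rewrite zstarE mk2_mul mk2_0; simp; done. Qed.

Lemma TFX (F : fieldType) : TF F Xi = 1%:M + xstar F.
Proof. rewrite /TF /Xi mk2_map xstarE mk2_1 mk2_add; simp; congr mk2; rewrite ?mulrNz ?mulr1z ?mulr0z //. Qed.
Lemma TFY (F : fieldType) : TF F Yi = 1%:M + ystar F.
Proof. rewrite /TF /Yi mk2_map ystarE mk2_1 mk2_add; simp; congr mk2; rewrite ?mulrNz ?mulr1z ?mulr0z //. Qed.
Lemma TFZ (F : fieldType) : TF F Zi = 1%:M + zstar F.
Proof. rewrite /TF /Zi mk2_map zstarE mk2_1 mk2_add; simp; congr mk2; rewrite ?mulrNz ?mulr1z ?mulr0z //. Qed.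

Lemma genX (F : fieldType) (charF0 : [pchar F] =i pred0) v : expad (xstar F) v = hat Xi v.
Proof. exact: (@gen_eq F charF0 _ _ (xx F) (TFX F)). Qed.
Lemma genY (F : fieldType) (charF0 : [pchar F] =i pred0) v : expad (ystar F) v = hat Yi v.
Proof. exact: (@gen_eq F charF0 _ _ (yy F) (TFY F)). Qed.
Lemma genZ (F : fieldType) (charF0 : [pchar F] =i pred0) v : expad (zstar F) v = hat Zi v.
Proof. exact: (@gen_eq F charF0 _ _ (zz F) (TFZ F)). Qed.

Definition Um (k : int) : 'M[int]_2 := mk2 1 k 0 1.

Lemma SL_Um k : SL2Z (Um k).
Proof. by rewrite /SL2Z /Um mk2_det mulr1 mulr0 subr0. Qed.

Lemma UmM a b : Um a *m Um b = Um (a + b).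
Proof. by rewrite /Um mk2_mul; simp; rewrite addrC. Qed.

Lemma Um0 : Um 0 = 1%:M.
Proof. by rewrite /Um mk2_1. Qed.

Section Gen.
Variable F : fieldType.
Variable charF0 : [pchar F] =i pred0.
Variable H : ('M[F]_2 -> 'M[F]_2) -> Prop.
Hypothesis HH : subgroup_closed H.
Hypothesis Hx : H (expad (xstar F)).
Hypothesis Hy : H (expad (ystar F)).
Hypothesis Hz : H (expad (zstar F)).

Let K t := H (@hat F t).

Lemma K1 : K 1%:M.
Proof. case: HH => Hid _ _ Hag; apply: (Hag _ _ Hid) => u _; by rewrite hat1. Qed.

Lemma Kmul t s : SL2Z t -> SL2Z s -> K t -> K s -> K (t *m s).
Proof.
case: HH => _ Hc _ Hag St Ss Kt Ks; apply: (Hag _ _ (Hc _ _ Kt Ks)) => u _.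
by rewrite hat_mul.
Qed.

Lemma Kinv t : SL2Z t -> K t -> K (invmx t).
Proof.
case: HH => _ _ Hi _ St Kt; have [Si Hit Hti] := SL2Z_inv t St.
apply: (Hi _ _ Kt) => u _; by rewrite -hat_mul // ?Hit ?Hti hat1.
Qed.

Lemma Kneg t : SL2Z t -> K t -> K (- t).
Proof. case: HH => _ _ _ Hag St Kt; apply: (Hag _ _ Kt) => u _; by rewrite hatN. Qed.

Lemma KY : K Yi.
Proof. case: HH => _ _ _ Hag; apply: (Hag _ _ Hy) => u _; exact: genY. Qed.
Lemma KZ : K Zi.
Proof. case: HH => _ _ _ Hag; apply: (Hag _ _ Hz) => u _; exact: genZ. Qed.

Lemma KUm1 : K (Um 1).
Proof.
have -> : Um 1 = invmx Zi.
  by apply/esym/inv_uniq; rewrite /Zi /Um mk2_mul mk2_1; simp.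
exact: (@Kinv Zi SL_Zi KZ).
Qed.

Lemma KUm k : K (Um k).
Proof.
have KUmN1 : K (Um (-1)) by exact: KZ.
have Hp n : K (Um n%:Z).
  elim: n => [|n IH]; first by rewrite Um0; exact: K1.
  by rewrite intS -UmM; apply: (Kmul _ _ (SL_Um _) (SL_Um _) KUm1 IH).
have Hn n : K (Um (- n%:Z)).
  elim: n => [|n IH]; first by rewrite oppr0 Um0; exact: K1.
  by rewrite intS opprD -UmM; apply: (Kmul _ _ (SL_Um _) (SL_Um _) KUmN1 IH).
by case: k => n //; rewrite NegzE.
Qed.

Lemma KnS : K (mk2 0 1 (-1) 0).
Proof.
have E : Zi *m Yi *m Zi = mk2 0 (-1) 1 0.
  by rewrite /Zi /Yi !mk2_mul; congr mk2.
have SS : SL2Z (Zi *m Yi *m Zi) by rewrite E /SL2Z mk2_det.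
have KS : K (Zi *m Yi *m Zi) :=
  Kmul _ _ (SL2Z_mul _ _ SL_Zi SL_Yi) SL_Zi (Kmul _ _ SL_Zi SL_Yi KZ KY) KZ.
have := Kneg _ SS KS; rewrite E mk2_opp; simp; by [].
Qed.

Lemma Kmain n : forall a b c d, (absz c < n)%N -> a * d - b * c = 1 -> K (mk2 a b c d).
Proof.
elim: n => [//|n IH] a b c d Hc Hdet.
have [c0|cn0] := eqVneq c 0.
  move: Hdet; rewrite c0 mulr0 subr0 => /int_unit [[-> ->]|[-> ->]].
    exact: KUm.
  have -> : mk2 (-1) b 0 (-1) = - Um (- b) by rewrite /Um mk2_opp opprK oppr0.
  by apply: Kneg; [exact: SL_Um | exact: KUm].
set q := (a %/ c)%Z; set r := (a %% c)%Z.
have Ea : mk2 a b c d = Um q *m mk2 0 1 (-1) 0 *m mk2 (- c) (- d) r (b - q * d).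
  rewrite /Um !mk2_mul; simp.
  by congr mk2; rewrite mulrNN; [rewrite -divz_eq | rewrite addrC subrK].
have SnS : SL2Z (mk2 0 1 (-1) 0) by rewrite /SL2Z mk2_det.
have St' : SL2Z (mk2 (- c) (- d) r (b - q * d)).
  move: Hdet; rewrite -mk2_det Ea !det_mulmx.
  by rewrite (SL_Um q) SnS !mul1r.
have Hr : (absz r < n)%N.
  have Hc' : (absz c <= n)%N by rewrite -ltnS.
  apply: leq_trans Hc'; rewrite -ltz_nat gez0_abs ?modz_ge0 // abszE.
  exact: ltz_mod.
rewrite Ea; apply: (Kmul _ _ (SL2Z_mul _ _ (SL_Um q) SnS) St').
  exact: (Kmul _ _ (SL_Um q) SnS (KUm q) KnS).
by move: St'; rewrite /SL2Z mk2_det; exact: IH.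
Qed.

Lemma Kall t : SL2Z t -> K t.
Proof.
rewrite /SL2Z [t](@mk2_eta int) mk2_det => Hd.
exact: (@Kmain (absz (t 1 0)).+1 _ _ _ _ (ltnSn _) Hd).
Qed.

End Gen.

Theorem theorem3p10 (F : fieldType) (charF0 : [pchar F] =i pred0) :
  [/\ (forall t, SL2Z t -> isLieAut (@hat F t)),
      (forall t1 t2, SL2Z t1 -> SL2Z t2 ->
         agree_sl2 (@hat F (t1 *m t2)) (@hat F t1 \o @hat F t2)),
      (forall t, SL2Z t -> (agree_sl2 (@hat F t) id <-> (t = 1 \/ t = -1))) &
      (forall f : 'M[F]_2 -> 'M[F]_2,
         Ggen f <-> exists t, SL2Z t /\ agree_sl2 f (@hat F t))].
Proof.
split.
- exact: part1.
- exact: part2.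
- exact: part3.
move=> f; split.
  move=> Gf; apply: (Gf (fun g => exists t, SL2Z t /\ agree_sl2 g (@hat F t))).
  - split.
    + exists 1%:M; split; first by rewrite /SL2Z det1.
      by move=> u _; rewrite hat1.
    + move=> g h [t [St Hg]] [s [Ss Hh]]; exists (t *m s); split.
        exact: SL2Z_mul.
      move=> u Hu /=; rewrite Hh // Hg ?sl2_hat //.
      by rewrite hat_mul.
    + move=> g h [t [St Hg]] c1 c2; have [Si Hit Hti] := SL2Z_inv t St.
      exists (invmx t); split=> // u Hu.
      have Hv : hat (invmx t) u \in sl2 (F:=F) by exact: sl2_hat.
      have E : g (hat (invmx t) u) = u by rewrite Hg // -hat_mul // Hti hat1.
      by rewrite -{1}E c1.
    + move=> g h [t [St Hg]] Hgh; exists t; split=> // u Hu.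
      by rewrite -Hgh // Hg.
  - by exists Xi; split; [exact: SL_Xi | move=> u _; exact: genX].
  - by exists Yi; split; [exact: SL_Yi | move=> u _; exact: genY].
  - by exists Zi; split; [exact: SL_Zi | move=> u _; exact: genZ].
case=> t [St Hf] H HH Hx Hy Hz.
have Kt := @Kall F charF0 _ HH Hy Hz _ St.
case: HH => _ _ _ Hag; apply: (Hag _ _ Kt) => u Hu.
by rewrite Hf.
Qed.
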